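(* Every finite nonempty inverse semigroup is $K$-thin.
   Context: An inverse semigroup is a semigroup in which every element $x$ has a unique $y$ with $xyx=x$ and $yxy=y$. For a finite nonempty semigroup $S$, the minimal ideal $K(S)$ is the intersection of all nonempty two-sided ideals of $S$. A Rees matrix semigroup $\mathcal{M}(H;I,J;p)$, for sets $I,J$, a group $H$ and a function $p\colon J\times I\to H$, is the set $I\times H\times J$ with product $(i,h,j)(i',h',j')=(i,h\,p(j,i')\,h',j')$. It is known that $K(S)$ is always isomorphic to such a Rees matrix semigroup with $H$ a finite group and $p$ normalized (i.e. $p(j_0,i)=e_H$ and $p(j,i_0)=e_H$ for some fixed $i_0\in I$, $j_0\in J$ and all $i,j$). $S$ is called $K$-thin if $K(S)$ has such a normalized Rees matrix structure with $|I|=1$ or $|J|=1$; equivalently, $K(S)$ is left-simple or right-simple. *)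

(* Defs.v *)
From mathcomp Require Import all_boot all_fingroup.
Set Implicit Arguments. Unset Strict Implicit. Unset Printing Implicit Defensive.

(* A finite semigroup is a finType S with an associative binary operation mul. *)

Definition inverse_semigroup (S : Type) (mul : S -> S -> S) : Prop :=
  forall x : S, exists! y : S, mul (mul x y) x = x /\ mul (mul y x) y = y.

Definition ideal (S : finType) (mul : S -> S -> S) (A : {set S}) : bool :=
  (A != set0) &&
  [forall a in A, forall s : S, (mul s a \in A) && (mul a s \in A)].

Definition minimal_ideal (S : finType) (mul : S -> S -> S) : {set S} :=
  \bigcap_(A : {set S} | ideal mul A) A.

Definition rees_mul (I J : Type) (H : finGroupType) (p : J -> I -> H)
  (x y : I * H * J) : I * H * J :=
  let: (i, h, j) := x in let: (i', h', j') := y in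
  (i, (h * p j i' * h')%g, j').

(* K(S) is isomorphic to a normalized Rees matrix semigroup M(H; I, J; p)
   over a finite group H with |I| = 1 or |J| = 1.  The isomorphism is given
   as an injective map phi from I * H * J onto K(S) that is multiplicative. *)
Definition K_thin (S : finType) (mul : S -> S -> S) : Prop :=
  exists (I J : finType) (H : finGroupType) (p : J -> I -> H) (i0 : I) (j0 : J),
    [/\ (forall i : I, p j0 i = 1%g),
        (forall j : J, p j i0 = 1%g),
        (#|I| = 1 \/ #|J| = 1) &
        exists phi : I * H * J -> S,
          [/\ injective phi,
              (forall s : S, s \in minimal_ideal mul <-> exists x, phi x = s) &
              (forall x y, phi (rees_mul p x y) = mul (phi x) (phi y))]].

(* Main.v *)
Require Import Defs.
From mathcomp Require Import all_boot all_fingroup.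
Set Implicit Arguments. Unset Strict Implicit. Unset Printing Implicit Defensive.

Section Alg.
Variable S : finType.
Variable mul : S -> S -> S.
Hypothesis mA : associative mul.
Hypothesis hinv : inverse_semigroup mul.
Local Notation "x ** y" := (mul x y) (at level 40, left associativity).

Definition isinv x y := (x ** y) ** x = x /\ (y ** x) ** y = y.

Lemma inv_uniq x y z : isinv x y -> isinv x z -> y = z.
Proof.
move=> Hy Hz; have [w [_ Hw]] := hinv x.
by rewrite -(Hw _ Hy) -(Hw _ Hz).
Qed.

Lemma inv_ex x : exists y, isinv x y.
Proof. by have [w [Hw _]] := hinv x; exists w. Qed.

Lemma lft u v : u = v -> forall a, a ** u = a ** v.
Proof. by move=> ->. Qed.

Lemma idem_mul e f : e ** e = e -> f ** f = f -> e ** f ** e ** f = e ** f.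
Proof.
move=> he hf; have [x [h1 h2]] := inv_ex (e ** f).
rewrite ?mA in h1 h2.
have he' a : a ** e ** e = a ** e by rewrite -mA he.
have hf' a : a ** f ** f = a ** f by rewrite -mA hf.
have h2' a : a ** x ** e ** f ** x = a ** x by move: (lft h2 a); rewrite ?mA.
have hx : x = f ** x ** e.
  apply: (inv_uniq (x := e ** f)); first by split; rewrite ?mA.
  by split; rewrite ?mA ?he' ?hf' ?h2' ?h1 ?h2.
have xx : x ** x = x by rewrite {1 2}hx !mA h2' -hx.
rewrite -mA.
have -> : e ** f = x.
  apply: (inv_uniq (x := x)); first by split; rewrite ?mA.
  by split; rewrite ?xx.
by rewrite xx.
Qed.

Lemma idem_comm e f : e ** e = e -> f ** f = f -> e ** f = f ** e.
Proof.
move=> he hf; have hef := idem_mul he hf; have hfe := idem_mul hf he.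
have he' a : a ** e ** e = a ** e by rewrite -mA he.
have hf' a : a ** f ** f = a ** f by rewrite -mA hf.
apply: (inv_uniq (x := e ** f)).
  by split; rewrite ?mA ?hef.
by split; rewrite ?mA ?he' ?hf' ?hef ?hfe.
Qed.

Lemma idealP (A : {set S}) :
  ideal mul A <-> (A != set0 /\ forall a s, a \in A -> s ** a \in A /\ a ** s \in A).
Proof.
rewrite /ideal; split.
  case/andP=> -> /forall_inP H; split=> // a s aA.
  by have /forallP/(_ s)/andP[] := H a aA.
case=> -> H; apply/forall_inP => a aA; apply/forallP => s.
by have [-> ->] := H a s aA.
Qed.

Hypothesis hS : 0 < #|S|.

Local Notation K := (minimal_ideal mul).

Lemma K_props : ideal mul K /\ forall A, ideal mul A -> K \subset A.
Proof.
have hT : ideal mul setT.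
  apply/idealP; split=> [|a s _]; last by rewrite !inE.
  by apply/set0Pn; case/card_gt0P: hS => x _; exists x; rewrite inE.
case: (arg_minnP (fun A : {set S} => #|A|) hT) => M hM hmin.
have HM : forall A, ideal mul A -> M \subset A.
  move=> A hA.
  have hB : ideal mul (M :&: A).
    case/idealP: hM => /set0Pn[m mM] HM'.
    case/idealP: hA => /set0Pn[a aA] HA.
    apply/idealP; split.
      apply/set0Pn; exists (m ** a); rewrite inE.
      by rewrite (HM' m a mM).2 (HA a m aA).1.
    move=> b s; rewrite inE => /andP[bM bA].
    have [h1 h2] := HM' b s bM; have [h3 h4] := HA b s bA.
    by rewrite !inE h1 h2 h3 h4.
  have := hmin _ hB.
  have sub : M :&: A \subset M by apply: subsetIl.
  move=> le; have /eqP eq : M :&: A == M by rewrite eqEcard sub le.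
  by rewrite -eq subsetIr.
have KM : K = M.
  apply/eqP; rewrite eqEsubset; apply/andP; split.
    exact: bigcap_inf.
  by apply/bigcapsP.
by rewrite KM; split.
Qed.

Lemma K_ideal a s : a \in K -> s ** a \in K /\ a ** s \in K.
Proof. by move=> aK; have [/idealP [_ H] _] := K_props; apply: H. Qed.

Lemma K_gen k j : j \in K -> exists x y, j = x ** k ** y.
Proof.
move=> jK.
pose B := [set j | [exists x, exists y, j == x ** k ** y]].
have hB : ideal mul B.
  apply/idealP; split.
    apply/set0Pn; case/card_gt0P: hS => x _; exists (x ** k ** x).
    by rewrite inE; apply/existsP; exists x; apply/existsP; exists x.
  move=> b s; rewrite inE => /existsP[x /existsP[y /eqP ->]]; split.
    by rewrite inE; apply/existsP; exists (s ** x); apply/existsP; exists y; rewrite ?mA.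
  by rewrite inE; apply/existsP; exists x; apply/existsP; exists (y ** s); rewrite ?mA.
have [_ H] := K_props; have /subsetP /(_ j jK) := H B hB.
by rewrite inE => /existsP[x /existsP[y /eqP ->]]; exists x, y.
Qed.

Lemma finmon f a a' : f ** f = f -> a ** a' = f -> f ** a' = a' -> a' ** f = a' ->
  a ** f = a -> a' ** a = f.
Proof.
move=> hf haa' hfa' ha'f haf.
pose T := [set x | f ** x == x].
have sub : [set a' ** x | x in T] \subset T.
  apply/subsetP => y /imsetP[x _ ->]; by rewrite inE mA hfa'.
have inj : {in T &, injective (mul a')}.
  move=> x y; rewrite !inE => /eqP hx /eqP hy hxy.
  by rewrite -hx -hy -haa' -!mA hxy.
have eqT : [set a' ** x | x in T] = T.
  by apply/eqP; rewrite eqEcard sub (card_in_imset inj) leqnn.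
have : f \in T by rewrite inE hf.
rewrite -eqT => /imsetP[y]; rewrite inE => /eqP hy hfy.
have e1 : a' ** a = a' ** a ** f by rewrite -mA haf.
rewrite e1 {1}hfy mA -(mA a' a a') haa' ha'f.
by rewrite hfy.
Qed.

Lemma idem_le z f : f \in K -> z ** z = z -> f ** f = f -> z ** f = z -> f ** z = z -> z = f.
Proof.
move=> fK hz hf hzf hfz.
have [x [y hxy]] := K_gen z fK.
pose a := f ** x ** z.
have [a' [ha1 ha2]] := inv_ex a.
have fa : f ** a = a by rewrite /a ?mA hf.
have az : a ** z = a by rewrite /a -mA hz.
pose p := a' ** a.
have pp : p ** p = p by rewrite /p mA ha2.
have pz : p ** z = p by rewrite /p -mA az.
have zp : z ** p = p by rewrite (idem_comm hz pp) pz.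
pose q := a ** a'.
have qq : q ** q = q by rewrite /q mA ha1.
have fq : f ** q = q by rewrite /q mA fa.
pose b := z ** y ** f.
have ab : f = a ** b.
  rewrite /a /b ?mA -(mA (f ** x) z z) hz -(mA f x z) -(mA f (x ** z) y) -hxy.
  by rewrite hf hf.
have qf : q ** f = f.
  by rewrite {1}ab /q mA ha1 -ab.
have qf' : q = f by rewrite -fq (idem_comm hf qq) qf.
have af : a ** f = a by rewrite -{1}az -mA hzf az.
have fp : f ** p = p by rewrite -zp mA hfz.
have fa' : f ** a' = a' by rewrite -{1}ha2 -/p mA fp /p ha2.
have a'f : a' ** f = a' by rewrite -qf' /q mA ha2.
have pf : p = f.
  by apply: (finmon hf _ fa' a'f af); rewrite -qf'.
by rewrite -hfz -{1}pf pz pf.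
Qed.

Lemma K_idem_uniq e f : e \in K -> f \in K -> e ** e = e -> f ** f = f -> e = f.
Proof.
move=> eK fK he hf.
have gg := idem_mul he hf; rewrite -mA in gg.
have ge : e ** f ** e = e ** f by rewrite (idem_comm he hf) -mA he.
have eg : e ** (e ** f) = e ** f by rewrite mA he.
have gf : e ** f ** f = e ** f by rewrite -mA hf.
have fg : f ** (e ** f) = e ** f by rewrite (idem_comm he hf) mA hf.
have h1 := idem_le eK gg he ge eg.
have h2 := idem_le fK gg hf gf fg.
by rewrite -h1 h2.
Qed.

Lemma K_group : exists e, [/\ e \in K,
  forall k, k \in K -> e ** k = k /\ k ** e = k &
  forall k, k \in K -> exists2 k', k' \in K & k ** k' = e].
Proof.
have [/idealP [/set0Pn [k0 k0K] _] _] := K_props.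
have [k0' [h1 h2]] := inv_ex k0.
pose e := k0 ** k0'.
have eK : e \in K by apply: (K_ideal _ k0K).2.
have ee : e ** e = e by rewrite /e mA h1.
have key : forall k, k \in K -> forall k', isinv k k' -> k ** k' = e /\ k' ** k = e /\ k' \in K.
  move=> k kK k' [hk1 hk2].
  have kk'K : k ** k' \in K by apply: (K_ideal _ kK).2.
  have k'kK : k' ** k \in K by apply: (K_ideal _ kK).1.
  split; first by apply: K_idem_uniq kk'K eK _ ee; rewrite mA hk1.
  split; first by apply: K_idem_uniq k'kK eK _ ee; rewrite mA hk2.
  by rewrite -hk2; apply: (K_ideal _ k'kK).2.
exists e; split=> // k kK; have [k' hk] := inv_ex k; have [e1 [e2 k'K]] := key k kK k' hk.
  by case: hk => hk1 _; split; [rewrite -e1 hk1 | rewrite -e2 mA hk1].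
by exists k'.
Qed.
End Alg.
Theorem proposition7p11 (S : finType) (mul : S -> S -> S) :
  associative mul -> 0 < #|S| -> inverse_semigroup mul -> K_thin mul.
Proof.
move=> mA hS hinv.
have [e [eK eid einv]] := K_group mA hinv hS.
pose K := minimal_ideal mul.
pose KT := {x : S | x \in K}.
pose rm (k : S) (x : KT) : KT := exist _ (mul (val x) k) (K_ideal hS k (valP x)).2.
have rinj : forall k : KT, injective (rm (val k)).
  move=> k x y /(congr1 val) /= hxy; apply: val_inj.
  have [k' _ kk'] := einv _ (valP k).
  by rewrite -(eid _ (valP x)).2 -(eid _ (valP y)).2 -kk' !mA hxy.
pose sg (k : KT) : {perm KT} := perm (rinj k).
have sgE k x : val (sg k x) = mul (val x) (val k) by rewrite permE.
pose ke : KT := exist _ e eK.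
pose kmul (k1 k2 : KT) : KT := exist _ (mul (val k1) (val k2)) (K_ideal hS (val k2) (valP k1)).2.
have sg1 : sg ke = 1%g.
  by apply/permP => x; apply: val_inj; rewrite sgE perm1 (eid _ (valP x)).2.
have sgM k1 k2 : (sg k1 * sg k2)%g = sg (kmul k1 k2).
  by apply/permP => x; apply: val_inj; rewrite permM !sgE /= mA.
pose G := [set sg k | k : KT].
have gs : group_set G.
  apply/group_setP; split; first by rewrite -sg1; apply: imset_f.
  move=> _ _ /imsetP[k1 _ ->] /imsetP[k2 _ ->].
  by rewrite sgM; apply: imset_f.
pose Gg : {group {perm KT}} := Group gs.
have sgval_ex (h : subg_of Gg) : exists k : KT, sgval h = sg k.
  by have /imsetP[k _ ->] := subgP h; exists k.
have sgke k : val (sg k ke) = val k by rewrite sgE /= (eid _ (valP k)).1.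
pose phi (x : unit * subg_of Gg * unit) : S := val (sgval x.1.2 ke).
exists unit, unit, (subg_of Gg), (fun _ _ => 1%g), tt, tt.
split => //; first by left; rewrite card_unit.
exists phi; split.
- move=> [[i h] j] [[i' h'] j']; rewrite /phi /=.
  have [k hk] := sgval_ex h; have [k' hk'] := sgval_ex h'.
  rewrite hk hk' !sgke => /val_inj kk.
  by case: i; case: j; case: i'; case: j'; congr (_, _, _); apply: subg_inj; rewrite hk hk' kk.
- move=> s; split.
    move=> sK; pose k : KT := exist _ s sK.
    have kG : sg k \in Gg by apply: imset_f.
    by exists (tt, subg Gg (sg k), tt); rewrite /phi /= subgK // sgke.
  by case=> x <-; apply: valP.
- move=> [[i h] j] [[i' h'] j']; rewrite /phi /=.
  have [k hk] := sgval_ex h; have [k' hk'] := sgval_ex h'.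
  rewrite mulg1 hk hk' sgM.
  have := sgke (kmul k k'); rewrite /= => ->.
  by rewrite !sgke.
Qed.
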